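(* $|\mathrm{GHZ}\rangle^{\otimes 3}\stackrel{\textrm{SLOCC}}{\longrightarrow}|W\rangle^{\otimes 2}$, where $|\mathrm{GHZ}\rangle=\frac{1}{\sqrt2}(|000\rangle+|111\rangle)$ and $|W\rangle=\frac{1}{\sqrt3}(|001\rangle+|010\rangle+|100\rangle)$ are three-qubit states shared by parties $A,B,C$ (in each ket the first qubit belongs to $A$, the second to $B$, the third to $C$), and tensor powers are taken with each party holding its own qubits from all copies.
   Context: For tripartite states, $|\psi\rangle\stackrel{\textrm{SLOCC}}{\longrightarrow}|\phi\rangle$ means that $|\psi\rangle$ can be transformed into $|\phi\rangle$ with nonzero success probability by local operations of the three parties and classical communication; equivalently, there exist linear operators $A,B,C$ on the respective parties' spaces with $(A\otimes B\otimes C)|\psi\rangle=|\phi\rangle$ up to a nonzero scalar. *)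

(* Defs.v *)
(* Scalars: an arbitrary numClosedFieldType C (e.g. algC, or
   complex R for R : rcfType), which covers the complex numbers. *)
From HB Require Import structures.
From mathcomp Require Import all_boot all_order all_algebra.
Set Implicit Arguments. Unset Strict Implicit. Unset Printing Implicit Defensive.
Import Order.TTheory GRing.Theory Num.Theory.
Local Open Scope ring_scope.

(* A tripartite state (vector in C^IA (x) C^IB (x) C^IC), given by its
   coefficients in the product computational basis. *)
Definition tri_state (C : Type) (IA IB IC : finType) := IA -> IB -> IC -> C.

Definition GHZ (C : numClosedFieldType) : tri_state C 'I_2 'I_2 'I_2 :=
  fun i j k => if (i == j) && (j == k) then (sqrtC 2)^-1 else 0.

Definition W (C : numClosedFieldType) : tri_state C 'I_2 'I_2 'I_2 :=
  fun i j k => if (i + j + k == 1)%N then (sqrtC 3)^-1 else 0.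

(* n-fold tensor power of a three-qubit state, each party holding its own n
   qubits: party X's local basis index is a word {ffun 'I_n -> 'I_2}, whose
   k-th letter is X's qubit from copy k. *)
Definition tpow {C : numClosedFieldType} (n : nat) (psi : tri_state C 'I_2 'I_2 'I_2)
  : tri_state C {ffun 'I_n -> 'I_2} {ffun 'I_n -> 'I_2} {ffun 'I_n -> 'I_2} :=
  fun a b c => \prod_(k < n) psi (a k) (b k) (c k).

Definition SLOCC {C : numClosedFieldType} {IA IB IC JA JB JC : finType}
  (psi : tri_state C IA IB IC) (phi : tri_state C JA JB JC) : Prop :=
  exists (A : JA -> IA -> C) (B : JB -> IB -> C) (Cop : JC -> IC -> C) (lam : C),
    lam != 0 /\
    forall a' b' c',
      \sum_(a : IA) \sum_(b : IB) \sum_(c : IC)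
         A a' a * B b' b * Cop c' c * psi a b c = lam * phi a' b' c'.

Arguments tpow {C} n psi _ _ _.

(* Main.v *)
Require Import Defs.
From mathcomp Require Import all_boot all_order all_algebra.
From mathcomp Require Import ring.
Set Implicit Arguments. Unset Strict Implicit. Unset Printing Implicit Defensive.
Import Order.TTheory GRing.Theory Num.Theory.
Local Open Scope ring_scope.


Definition vv {C : numClosedFieldType} (i x y : nat) : C :=
match i, x, y with
| 0,0,0 => 1 | 0,1,0 => 1 | 0,0,1 => 1
| 1,0,0 => 1 | 1,1,0 => -1 | 1,0,1 => -1
| 2,0,0 => 1 | 2,1,0 => 1 | 2,0,1 => -1
| 3,0,0 => 1 | 3,1,0 => -1 | 3,0,1 => 1
| 4,0,0 => 1 | 4,1,1 => 1
| 5,0,0 => 1 | 5,1,1 => -1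
| 6,1,1 => 1
| _,_,_ => 0 end.
Definition dd {C : numClosedFieldType} (i : nat) : C := match i with 0|1 => 1 | 2|3 => -1 | 4 => 2 | 5 => -2 | 6 => -4 | _ => 0 end.

Lemma key (C : numClosedFieldType) (x0 x1 y0 y1 z0 z1 : 'I_2) :
 \sum_(i<8) (dd i : C) * vv i x0 x1 * vv i y0 y1 * vv i z0 z1 =
 4 * ((if (x0+y0+z0==1)%N then 1 else 0) * (if (x1+y1+z1==1)%N then 1 else 0)).
Proof.
rewrite !big_ord_recr big_ord0 /=.
case: x0 => [[|[|//]] ?]; case: x1 => [[|[|//]] ?];
case: y0 => [[|[|//]] ?]; case: y1 => [[|[|//]] ?];
case: z0 => [[|[|//]] ?]; case: z1 => [[|[|//]] ?] => /=; ring.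
Qed.

Definition k0 : 'I_2 := @Ordinal 2 0 isT.
Definition k1 : 'I_2 := @Ordinal 2 1 isT.
Definition i0 : 'I_3 := @Ordinal 3 0 isT.
Definition i1 : 'I_3 := @Ordinal 3 1 isT.
Definition i2 : 'I_3 := @Ordinal 3 2 isT.

Lemma prod2 (C : numClosedFieldType) (F : 'I_2 -> C) : \prod_(k<2) F k = F k0 * F k1.
Proof.
rewrite !big_ord_recr big_ord0 /= mul1r.
by congr (F _ * F _); apply: val_inj.
Qed.

Lemma ghz_diag (C : numClosedFieldType) (a b c : {ffun 'I_3 -> 'I_2}) :
  tpow 3 (@GHZ C) a b c = if (a==b)&&(a==c) then (sqrtC 2)^-1 ^+ 3 else 0.
Proof.
rewrite /tpow; case: ifP => [/andP[/eqP<- /eqP<-]|H].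
  rewrite (eq_bigr (fun=> (sqrtC 2)^-1)) ?prodr_const ?card_ord //.
  move=> k _. rewrite /GHZ. by case: eqP.
case: (pickP (fun k => ~~((a k == b k) && (b k == c k)))) => [k Hk|Hall].
  by rewrite (bigD1 k) //= /GHZ (negbTE Hk) mul0r.
suff [Eb Ec] : a = b /\ a = c by rewrite -Eb -Ec !eqxx in H.
have E k : a k = b k /\ b k = c k.
  by move: (Hall k) => /= /negbFE /andP[/eqP -> /eqP ->].
split; apply/ffunP => k; have [E1 E2] := E k; by rewrite E1 ?E2.
Qed.

Lemma collapse (C : numClosedFieldType) (T : finType) (F : T -> T -> C) a g :
  \sum_b \sum_c F b c * (if (a==b)&&(a==c) then g else 0) = F a a * g.
Proof.
rewrite (bigD1 a) //= [X in _ + X]big1 => [|b Hb]; last first.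
  by apply: big1 => c _; rewrite eq_sym (negbTE Hb) mulr0.
rewrite addr0 (bigD1 a) //= eqxx big1 ?addr0 // => c Hc.
by rewrite eq_sym (negbTE Hc) mulr0.
Qed.

Definition hh (i : 'I_8) : {ffun 'I_3 -> 'I_2} := [ffun k : 'I_3 => inord (odd (i %/ 2^k))].
Definition idx (a : {ffun 'I_3 -> 'I_2}) : 'I_8 := inord (a i0 + 2 * a i1 + 4 * a i2).

Lemma I2 (b : bool) : ((@inord 1 b) : nat) = b.
Proof. by rewrite inordK //; case: b. Qed.

Lemma idx_hh : cancel hh idx.
Proof.
move=> i; apply: ord_inj; rewrite /idx /hh !ffunE !I2.
case: i => m Hm.
do 8 (case: m Hm => [|m] Hm; first by rewrite inordK).
by [].
Qed.

Lemma hh_idx : cancel idx hh.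
Proof.
move=> a; apply/ffunP => k; rewrite /idx /hh ffunE.
have ha : forall k, (a k < 2)%N by move=> k'; exact: ltn_ord.
apply: ord_inj; rewrite I2 inordK; last first.
  by move: (a i0) (a i1) (a i2) => [[|[|//]] ?] [[|[|//]] ?] [[|[|//]] ?].
have [->|[->|->]] : k = i0 \/ k = i1 \/ k = i2.
  by case: k => [[|[|[|//]]] Hk]; [left|right;left|right;right]; apply: val_inj.
all: by move: (a i0) (a i1) (a i2) => [[|[|//]] ?] [[|[|//]] ?] [[|[|//]] ?].
Qed.

Lemma sum_idx (C : numClosedFieldType) (G : 'I_8 -> C) : \sum_(a : {ffun 'I_3 -> 'I_2}) G (idx a) = \sum_(i < 8) G i.
Proof.
rewrite (reindex hh); last by apply: onW_bij; exists idx; [exact: idx_hh | exact: hh_idx].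
by apply: eq_bigr => i _; rewrite idx_hh.
Qed.

Theorem theorem1 (C : numClosedFieldType) :
  SLOCC (tpow 3 (@GHZ C)) (tpow 2 (@W C)).
Proof.
pose g : C := (sqrtC 2)^-1 ^+ 3.
exists (fun (a' : {ffun 'I_2 -> 'I_2}) (a : {ffun 'I_3 -> 'I_2}) => (dd (idx a) : C) * vv (idx a) (a' k0) (a' k1)).
exists (fun (b' : {ffun 'I_2 -> 'I_2}) (a : {ffun 'I_3 -> 'I_2}) => (vv (idx a) (b' k0) (b' k1) : C)).
exists (fun (c' : {ffun 'I_2 -> 'I_2}) (a : {ffun 'I_3 -> 'I_2}) => (vv (idx a) (c' k0) (c' k1) : C)).
exists (4 * g / (sqrtC 3)^-1 ^+ 2).
have s2 : sqrtC 2 != 0 :> C by rewrite sqrtC_eq0 pnatr_eq0.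
have s3 : sqrtC 3 != 0 :> C by rewrite sqrtC_eq0 pnatr_eq0.
split.
  by rewrite /g !mulf_neq0 ?invr_eq0 ?expf_neq0 ?invr_eq0 ?pnatr_eq0.
move=> a' b' c'.
under eq_bigr => a _ do under eq_bigr => b _ do under eq_bigr => c _ do rewrite ghz_diag.
under eq_bigr => a _ do rewrite (collapse (fun b c => (dd (idx a) : C) * vv (idx a) (a' k0) (a' k1) * vv (idx b) (b' k0) (b' k1) * vv (idx c) (c' k0) (c' k1))).
rewrite (sum_idx (fun i => (dd i : C) * vv i (a' k0) (a' k1) * vv i (b' k0) (b' k1) * vv i (c' k0) (c' k1) * g)).
rewrite -big_distrl /= key /tpow prod2 /W /=.
by case: ifP => _; case: ifP => _; rewrite ?mulr0 ?mul0r //; field; rewrite ?invr_eq0 ?s3.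
Qed.
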